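(* For every integer $n\geq 6$, $$\dot{\imath}_{[1,2]}(P_6\Box P_n)=\begin{cases}\left\lfloor \frac{10n+17}{7}\right\rfloor & \text{if } n\equiv 0 \text{ or } 3 \pmod 7 \text{ and } n\neq 7,\\[2pt] \left\lfloor \frac{10n+10}{7}\right\rfloor & \text{otherwise.}\end{cases}$$
   Context: $P_k$ denotes the path on $k$ vertices and $P_m\Box P_n$ the Cartesian product of two paths (the $m\times n$ grid graph). A set $S$ of vertices of a graph $G$ is independent if no two vertices of $S$ are adjacent, and dominating if every vertex not in $S$ has at least one neighbor in $S$. An independent $[1,2]$-set of $G$ is an independent dominating set $S$ such that every vertex $v\in V(G)\setminus S$ has at least one and at most two neighbors in $S$. When $G$ has an independent $[1,2]$-set, $\dot{\imath}_{[1,2]}(G)$ denotes the minimum cardinality of an independent $[1,2]$-set of $G$ (the statement includes the existence of such a set). *)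

(* Defs.v *)
From mathcomp Require Import all_boot.
Set Implicit Arguments. Unset Strict Implicit. Unset Printing Implicit Defensive.

Definition path_adj (k : nat) (i j : 'I_k) : bool :=
  (i.+1 == j :> nat) || (j.+1 == i :> nat).

Definition grid_adj (m n : nat) (u v : 'I_m * 'I_n) : bool :=
  ((u.1 == v.1) && path_adj u.2 v.2) || ((u.2 == v.2) && path_adj u.1 v.1).

Definition independent (T : finType) (e : rel T) (S : {set T}) : bool :=
  [forall x in S, forall y in S, ~~ e x y].

Definition nbrs_in (T : finType) (e : rel T) (S : {set T}) (v : T) : nat :=
  #|[set u in S | e v u]|.

Definition indep12 (T : finType) (e : rel T) (S : {set T}) : bool :=
  independent e S &&
  [forall v in ~: S, (1 <= nbrs_in e S v) && (nbrs_in e S v <= 2)].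

Definition is_i12_number (T : finType) (e : rel T) (k : nat) : Prop :=
  (exists S : {set T}, indep12 e S /\ #|S| = k) /\
  (forall S : {set T}, indep12 e S -> k <= #|S|).

(* Main.v *)
Require Import Defs.
From mathcomp Require Import all_boot.
From mathcomp Require Import zify.
Set Implicit Arguments. Unset Strict Implicit. Unset Printing Implicit Defensive.

Definition col := seq bool.
Definition zc : col := nseq 6 false.
Definition cnt (c : col) : nat := count id c.
Definition nbu (b : col) (i : nat) : bool := if i is i'.+1 then nth false b i' else false.
Definition cell (a b d : col) (i : nat) : bool :=
  let k := nbu b i + nth false b i.+1 + nth false a i + nth false d i in
  if nth false b i then k == 0 else (1 <= k) && (k <= 2).
Definition ok3 (a b d : col) : bool := all (cell a b d) (iota 0 6).
Definition code2col (k : nat) : col := mkseq (fun i => odd (k %/ 2 ^ i)) 6.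
Definition allcols : seq col := [seq code2col k | k <- iota 0 64].
Definition state := (col * col)%type.
Fixpoint upd (t : seq (state * nat)) (s : state) (v : nat) : seq (state * nat) :=
  match t with
  | [::] => [:: (s, v)]
  | (s', v') :: t' => if s' == s then (s', minn v v') :: t' else (s', v') :: upd t' s v
  end.
Definition step (t : seq (state * nat)) : seq (state * nat) :=
  foldl (fun acc e => foldl (fun acc c => if ok3 e.1.1 e.1.2 c then upd acc (e.1.2, c) (e.2 + cnt c) else acc) acc allcols) [::] t.
Definition tab1 : seq (state * nat) := [seq ((zc, c), cnt c) | c <- allcols].
Definition tab (n : nat) := iter n.-1 step tab1.
Definition lookup (t : seq (state * nat)) (s : state) : option nat :=
  ohead [seq e.2 | e <- t & e.1 == s].
Definition TCtab (t1 t2 : seq (state * nat)) (d : nat) : bool :=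
  all (fun e => all (fun c => if ok3 e.1.1 e.1.2 c then
     match lookup t2 (e.1.2, c) with Some w => w + d <= e.2 + cnt c | None => false end else true) allcols) t1.

Definition fv (n : nat) : nat :=
  if ((n %% 7 == 0) || (n %% 7 == 3)) && (n != 7)
     then (10 * n + 17) %/ 7
     else (10 * n + 10) %/ 7.

Definition FCtab (t : seq (state * nat)) (m : nat) : bool :=
  all (fun e => if ok3 e.1.1 e.1.2 zc then m <= e.2 else true) t.

Definition allchecksF (ts : seq (seq (state * nat))) : bool :=
  [&& all (fun k => TCtab (nth tab1 ts k) (nth tab1 ts k.+1) 0) (iota 0 14),
  TCtab (nth tab1 ts 14) (nth tab1 ts 8) 10,
  all (fun k => FCtab (nth tab1 ts k) (fv k.+1)) (iota 5 10) &
  all (fun c => lookup tab1 (zc, c) == Some (cnt c)) allcols].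

Lemma allchecks_ok : allchecksF (traject step tab1 16).
Proof. vm_compute. reflexivity. Qed.

Lemma nth_traj k : k < 16 -> nth tab1 (traject step tab1 16) k = tab k.+1.
Proof.
move=> hk. by rewrite nth_traject.
Qed.

Lemma lookupP t s v : lookup t s = Some v -> exists2 e, e \in t & (e.1 = s /\ e.2 = v).
Proof.
rewrite /lookup; elim: t => [|e t IH] //=.
case: ifP => [/eqP es [<-]|_ /IH [e' he' h]]; first by exists e; rewrite ?mem_head.
by exists e'; rewrite // in_cons he' orbT.
Qed.

Lemma TCtabP t1 t2 d a b c v : TCtab t1 t2 d -> lookup t1 (a,b) = Some v ->
  c \in allcols -> ok3 a b c -> exists w, lookup t2 (b,c) = Some w /\ w + d <= v + cnt c.
Proof.
move=> /allP h /lookupP [e he [e1 e2]] hc hok.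
move: (h e he) => /allP /(_ c hc); rewrite e1 e2 /= hok.
by case: (lookup t2 (b, c)) => // w hw; exists w.
Qed.

Lemma checksE : (forall k, 1 <= k <= 14 -> TCtab (tab k) (tab k.+1) 0) /\
  TCtab (tab 15) (tab 9) 10 /\ (forall k, 6 <= k <= 15 -> FCtab (tab k) (fv k)) /\
  (forall c, c \in allcols -> lookup (tab 1) (zc,c) = Some (cnt c)).
Proof.
have := allchecks_ok; have := nth_traj; move: (traject step tab1 16) => ts hnth.
rewrite /allchecksF => /and4P [/allP h1 h2 /allP h3 /allP h4].
split; [|split; [|split]].
- move=> k hk; move: (h1 k.-1); rewrite mem_iota.
  have -> : k.-1.+1 = k by lia.
  rewrite !hnth; try lia. by move=> ->//; lia.
- by move: h2; rewrite !hnth.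
- move=> k hk; move: (h3 k.-1); rewrite mem_iota.
  have -> : k.-1.+1 = k by lia.
  rewrite !hnth; try lia. by move=> ->//; lia.
- by move=> c /h4 /eqP.
Qed.

Opaque tab.

Opaque tab.

Fixpoint B (n : nat) (s : state) {struct n} : option nat :=
  match n with
  | S (S (S (S (S (S (S k)))))) => if k < 9 then lookup (tab n) s else omap (addn 10) (B k s)
  | _ => lookup (tab n) s
  end.

Lemma B_small n s : n < 16 -> B n s = lookup (tab n) s.
Proof.
case: n => [|[|[|[|[|[|[|k]]]]]]] hn; try reflexivity.
change (B k.+4.+3 s) with (if k < 9 then lookup (tab k.+4.+3) s else omap (addn 10) (B k s)).
have hk : k < 9 by lia.
rewrite hk; reflexivity.
Qed.

Lemma B_big k s : 9 <= k -> B (k + 7) s = omap (addn 10) (B k s).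
Proof.
move=> hk; rewrite (_ : k + 7 = k.+4.+3); last by lia.
change (B k.+4.+3 s) with (if k < 9 then lookup (tab k.+4.+3) s else omap (addn 10) (B k s)).
have hk' : (k < 9) = false by apply/negbTE; rewrite -leqNgt.
rewrite hk'; reflexivity.
Qed.

Lemma TC k a b c v : 0 < k -> B k (a,b) = Some v -> c \in allcols -> ok3 a b c ->
  exists w, B k.+1 (b,c) = Some w /\ w <= v + cnt c.
Proof.
have [h1 [h2 _]] := checksE.
elim/ltn_ind: k a b c v => k IH a b c v k0 hB hc hok.
case: (ltnP k 15) => hk.
- rewrite B_small in hB; last by lia.
  rewrite B_small; last by lia.
  have [w [hw hle]] := TCtabP (h1 k (ltac:(lia))) hB hc hok.
  exists w; split; first exact: hw.
  rewrite addn0 in hle; exact: hle.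
case: (ltnP k 16) => hk2.
- have E : k = 15 by lia.
  rewrite E in hB; rewrite E.
  rewrite B_small in hB; last by lia.
  have [w [hw hle]] := TCtabP h2 hB hc hok.
  exists (10 + w); split; last by lia.
  rewrite (_ : 16 = 9 + 7); last reflexivity.
  rewrite B_big; last by lia.
  rewrite B_small; last by lia.
  rewrite hw; reflexivity.
- have E : k = (k - 7) + 7 by lia.
  rewrite E in hB.
  rewrite B_big in hB; last by lia.
  case hB': (B (k - 7) (a, b)) => [v'|]; rewrite hB' in hB; last discriminate.
  case: hB => hv.
  have [w [hw hle]] := IH (k - 7) ltac:(lia) a b c v' ltac:(lia) hB' hc hok.
  exists (10 + w); split; last by lia.
  have E2 : k.+1 = (k - 7).+1 + 7 by lia.
  rewrite E2 B_big; last by lia.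
  rewrite hw; reflexivity.
Qed.

Lemma fv7 m : 8 <= m -> fv (m + 7) = fv m + 10.
Proof.
move=> hm; rewrite /fv modnDr.
have -> : (m + 7 != 7) = true by apply/eqP; lia.
have -> : (m != 7) = true by apply/eqP; lia.
case: ifP => _; lia.
Qed.

Lemma FC n a b v : 6 <= n -> B n (a,b) = Some v -> ok3 a b zc -> fv n <= v.
Proof.
have [_ [_ [h3 _]]] := checksE.
elim/ltn_ind: n v => n IH v hn hB hok.
case: (ltnP n 16) => hk.
- rewrite B_small in hB; last by lia.
  have [e he [e1 e2]] := lookupP hB.
  have := allP (h3 n ltac:(lia)) e he; rewrite e1 e2 /= hok; exact.
- have E : n = (n - 7) + 7 by lia.
  rewrite E B_big in hB; last by lia.
  case hB': (B (n - 7) (a, b)) => [v'|]; rewrite hB' in hB; last discriminate.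
  case: hB => hv.
  have := IH (n - 7) ltac:(lia) v' ltac:(lia) hB' hok.
  have : fv n = fv (n - 7) + 10.
    rewrite {1}E fv7 //; lia.
  lia.
Qed.

Lemma inv (w : nat -> col) : (forall c, w c \in allcols) -> w 0 = zc ->
  forall n, 0 < n -> (forall c, 0 < c < n -> ok3 (w c.-1) (w c) (w c.+1)) ->
  exists v, B n (w n.-1, w n) = Some v /\ v <= \sum_(i < n) cnt (w i.+1).
Proof.
move=> hall h0; elim=> [|n IH] // _ hok.
case: n IH hok => [|n] IH hok.
- exists (cnt (w 1)); rewrite big_ord1.
  change (w 0%N.+1.-1, w 1) with (w 0, w 1). rewrite h0 B_small; last by [].
  have [_ [_ [_ h4]]] := checksE; rewrite h4 //.
- have [v [hv hle]] := IH ltac:(lia) (fun c hc => hok c ltac:(lia)).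
  have [w' [hw hle']] := @TC n.+1 _ _ _ _ (ltn0Sn _) hv (hall n.+2) (hok n.+1 ltac:(lia)).
  exists w'; split; first exact: hw.
  rewrite big_ord_recr; apply: leq_trans hle' _; exact: leq_add hle (leqnn _).
Qed.

Lemma lower_word (w : nat -> col) n : 6 <= n -> (forall c, w c \in allcols) -> w 0 = zc ->
  w n.+1 = zc -> (forall c, 0 < c < n.+1 -> ok3 (w c.-1) (w c) (w c.+1)) ->
  fv n <= \sum_(i < n) cnt (w i.+1).
Proof.
move=> hn hall h0 hn1 hok.
have [v [hv hle]] := @inv w hall h0 n ltac:(lia) (fun c hc => hok c ltac:(lia)).
have hok' : ok3 (w n.-1) (w n) zc.
  rewrite -hn1; have := hok n ltac:(lia).
  have -> : n.+1 = n.-1.+1.+1 by lia.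
  have -> : n = n.-1.+1 by lia.
  by [].
have := FC hn hv hok'. lia.
Qed.

Definition Fc n (S : {set 'I_6 * 'I_n}) (r c : nat) : bool :=
  [exists u, (u \in S) && ((u.1.+1 == r) && (u.2.+1 == c))].
Definition colS n (S : {set 'I_6 * 'I_n}) (c : nat) : col := mkseq (fun i => Fc S i.+1 c) 6.

Lemma Fc_out n (S : {set 'I_6 * 'I_n}) r c : (r == 0) || (6 < r) || (c == 0) || (n < c) -> Fc S r c = false.
Proof.
move=> h; rewrite /Fc; apply/negbTE/existsP => -[u /andP [_ /andP [/eqP h1 /eqP h2]]].
have := ltn_ord u.1; have := ltn_ord u.2; move: h; rewrite -h1 -h2; lia.
Qed.

Lemma nth_colS n (S : {set 'I_6 * 'I_n}) k c : nth false (colS S c) k = Fc S k.+1 c.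
Proof.
case: (ltnP k 6) => hk; first by rewrite nth_mkseq.
by rewrite nth_default ?size_mkseq // Fc_out //; apply/orP; left; apply/orP; left; apply/orP; right.
Qed.

Lemma nbu_colS n (S : {set 'I_6 * 'I_n}) i c : nbu (colS S c) i = Fc S i c.
Proof. by case: i => [|i] /=; [rewrite Fc_out | rewrite nth_colS]. Qed.

Lemma Fc_in n (S : {set 'I_6 * 'I_n}) (i : 'I_6) (j : 'I_n) : Fc S i.+1 j.+1 = ((i, j) \in S).
Proof.
rewrite /Fc; apply/existsP/idP => [[[u1 u2] /andP [hu /andP [/eqP h1 /eqP h2]]]|h].
  have e1 : u1 = i by apply/val_inj; case: h1.
  have e2 : u2 = j by apply/val_inj; case: h2.
  by rewrite -e1 -e2.
by exists (i, j); rewrite h /= !eqxx.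
Qed.

Lemma sum_le1 (T : finType) (P : pred T) : (forall x y, P x -> P y -> x = y) ->
  \sum_x (P x : nat) = [exists x, P x].
Proof.
move=> h; case: (pickP P) => [x Px | P0].
- have -> : [exists x, P x] by apply/existsP; exists x.
  rewrite (bigD1 x) //= big1 ?addn0 ?Px //.
  by move=> y ynx; case Py: (P y) => //; move: ynx; rewrite (h _ _ Px Py) eqxx.
- rewrite big1 => [|y _]; last by rewrite P0.
  have -> : [exists x, P x] = false by apply/negbTE/existsP => -[x]; rewrite P0.
  by [].
Qed.

Lemma adj_split n (v u : 'I_6 * 'I_n) :
  (grid_adj v u : nat) =
   ((u.1.+1 == v.1) && (u.2.+1 == v.2.+1) : nat) +
   ((u.1.+1 == v.1.+2) && (u.2.+1 == v.2.+1) : nat) +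
   ((u.1.+1 == v.1.+1) && (u.2.+1 == v.2) : nat) +
   ((u.1.+1 == v.1.+1) && (u.2.+1 == v.2.+2) : nat).
Proof.
rewrite /grid_adj /path_adj -!(inj_eq val_inj) /=.
move: (v.1 : nat) (v.2 : nat) (u.1 : nat) (u.2 : nat) => x y i j.
repeat case: eqP => ? /=; try lia.
Qed.

Lemma sumFc n (S : {set 'I_6 * 'I_n}) r c :
  \sum_u ((u \in S) && ((u.1.+1 == r) && (u.2.+1 == c)) : nat) = Fc S r c.
Proof.
apply: sum_le1 => -[a b] [a' b'] /= /andP [_ /andP [/eqP h1 /eqP h2]] /= /andP [_ /andP [/eqP h1' /eqP h2']].
by congr pair; apply: ord_inj; lia.
Qed.

Lemma nbrsE n (S : {set 'I_6 * 'I_n}) v : nbrs_in (@grid_adj 6 n) S v =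
  Fc S v.1 v.2.+1 + Fc S v.1.+2 v.2.+1 + Fc S v.1.+1 v.2 + Fc S v.1.+1 v.2.+2.
Proof.
rewrite /nbrs_in -sum1_card big_mkcond /=.
rewrite (eq_bigr (fun u =>
   ((u \in S) && ((u.1.+1 == v.1) && (u.2.+1 == v.2.+1)) : nat) +
   ((u \in S) && ((u.1.+1 == v.1.+2) && (u.2.+1 == v.2.+1)) : nat) +
   ((u \in S) && ((u.1.+1 == v.1.+1) && (u.2.+1 == v.2)) : nat) +
   ((u \in S) && ((u.1.+1 == v.1.+1) && (u.2.+1 == v.2.+2)) : nat))) => [|u _].
  by rewrite !big_split /= !sumFc.
rewrite inE; case: (u \in S) => /=; last by [].
by rewrite -adj_split; case: grid_adj.
Qed.

Lemma cellE n (S : {set 'I_6 * 'I_n}) (v : 'I_6 * 'I_n) :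
  cell (colS S v.2) (colS S v.2.+1) (colS S v.2.+2) v.1 =
  if v \in S then nbrs_in (@grid_adj 6 n) S v == 0
  else (1 <= nbrs_in (@grid_adj 6 n) S v) && (nbrs_in (@grid_adj 6 n) S v <= 2).
Proof.
case: v => i j; rewrite /cell nbu_colS !nth_colS nbrsE /= Fc_in //.
Qed.

Lemma indep12E n (S : {set 'I_6 * 'I_n}) : indep12 (@grid_adj 6 n) S =
  [forall v : 'I_6 * 'I_n, cell (colS S v.2) (colS S v.2.+1) (colS S v.2.+2) v.1].
Proof.
rewrite /indep12 /independent; apply/andP/forallP.
- case => /forallP hind /forallP hcov v; rewrite cellE; case: ifP => hv.
  + rewrite /nbrs_in cards_eq0; apply/eqP/setP => y; rewrite !inE; apply/negbTE.
    have := hind v; rewrite hv /= => /forallP /(_ y).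
    by case: (y \in S); case: (grid_adj v y).
  + by have := hcov v; rewrite inE hv.
- move=> h; split.
  + apply/forallP => x; apply/implyP => hx; apply/forallP => y; apply/implyP => hy.
    have := h x; rewrite cellE hx /nbrs_in cards_eq0 => /eqP /setP /(_ y).
    by rewrite !inE hy /= => ->.
  + apply/forallP => v; apply/implyP; rewrite inE => hv.
    by have := h v; rewrite cellE (negbTE hv).
Qed.

Lemma indep12_ok3 n (S : {set 'I_6 * 'I_n}) : indep12 (@grid_adj 6 n) S =
  [forall j : 'I_n, ok3 (colS S j) (colS S j.+1) (colS S j.+2)].
Proof.
rewrite indep12E; apply/forallP/forallP.
- move=> h j; apply/allP => i; rewrite mem_iota add0n => /andP [_ hi].
  exact: (h (Ordinal hi, j)).
- move=> h [i j]; apply: (allP (h j)); rewrite mem_iota /=; have := ltn_ord i; lia.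
Qed.

Lemma cnt_mkseq m (f : nat -> bool) : cnt (mkseq f m) = \sum_(i < m) f i.
Proof.
elim: m => [|m IH]; first by rewrite big_ord0.
by rewrite big_ord_recr -IH /cnt mkseqS -cats1 count_cat /= addn0.
Qed.

Lemma cardS n (S : {set 'I_6 * 'I_n}) : #|S| = \sum_(j < n) cnt (colS S j.+1).
Proof.
rewrite (eq_bigr (fun j : 'I_n => \sum_(i < 6) (Fc S i.+1 j.+1 : nat))) => [|j _]; last first.
  by rewrite /colS cnt_mkseq.
rewrite -sum1_card big_mkcond /=.
transitivity (\sum_(i : 'I_6) \sum_(j : 'I_n) (if (i,j) \in S then 1 else 0)).
  by rewrite pair_bigA; apply: eq_bigr => -[i j].
rewrite exchange_big; apply: eq_bigr => j _; apply: eq_bigr => i _.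
by rewrite Fc_in; case: (_ \in S).
Qed.

Fixpoint valid3 (l : seq col) : bool :=
  match l with a :: ((b :: c :: _) as t) => ok3 a b c && valid3 t | _ => true end.

Definition hd3 (a : col) (t : seq col) : bool :=
  match t with b :: c :: _ => ok3 a b c | _ => true end.

Lemma valid3_cons a t : valid3 (a :: t) = hd3 a t && valid3 t.
Proof. by case: t => [|b [|c t]]. Qed.

Lemma valid3_nth L : valid3 L -> forall i, i.+2 < size L ->
  ok3 (nth zc L i) (nth zc L i.+1) (nth zc L i.+2).
Proof.
elim: L => [|a t IH] //; rewrite valid3_cons => /andP [h1 h2] [|i] hi.
- by move: h1 hi; case: t {IH h2} => [|b [|c t]].
- exact: IH.
Qed.

Lemma valid3_cat p x y q : valid3 (p ++ [:: x; y]) -> valid3 ([:: x; y] ++ q) ->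
  valid3 (p ++ [:: x; y] ++ q).
Proof.
elim: p => [|a p IH] // h1 h2; move: h1; rewrite !cat_cons !valid3_cons => /andP [ha hb].
rewrite (IH hb h2) andbT; move: ha.
by case: p {IH hb} => [|b [|c p]].
Qed.

Fixpoint rep (C : seq col) (q : nat) : seq col := if q is q'.+1 then C ++ rep C q' else [::].

Lemma valid3_rep x y C' T q : valid3 ([:: x; y] ++ C' ++ [:: x; y]) -> valid3 ([:: x; y] ++ T) ->
  valid3 ([:: x; y] ++ rep (C' ++ [:: x; y]) q ++ T).
Proof.
move=> hC hT; elim: q => [|q IH] //=.
have := @valid3_cat ([:: x; y] ++ C') x y (rep (C' ++ [:: x; y]) q ++ T).
rewrite -!catA; apply => //.
Qed.


Definition xc := code2col 32.
Definition yc := code2col 10.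
Definition Cp : seq col := map code2col [:: 32; 5; 16; 2; 40; 1; 20; 1; 40; 2; 16; 5].
Definition Ap (b : nat) : seq col := map code2col
  match b with
  | 8 => [:: 20; 1; 40; 2; 16; 5]
  | 9 => [:: 18; 4; 33; 8; 34; 16; 5]
  | 10 => [:: 21]
  | 11 => [:: 20; 1; 40; 2; 16; 5]
  | 12 => [:: 20; 1; 40; 2; 16; 5]
  | 13 => [:: 9; 34; 16; 5]
  | 14 => [:: 21]
  | 15 => [:: 20; 1; 40; 2; 16; 5]
  | 16 => [:: 20; 1; 40; 2; 16; 5]
  | 17 => [:: 21]
  | 18 => [:: 20; 1; 40; 2; 16; 5]
  | 19 => [:: 20; 1; 40; 2; 16; 5]
  | 20 => [:: 9; 34; 16; 5]
  | _ => [:: 21]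
  end.
Definition Dp (b : nat) : seq col := map code2col
  match b with
  | 8 => [::]
  | 9 => [::]
  | 10 => [:: 32; 5; 16; 2; 40; 1; 20]
  | 11 => [:: 33; 4; 18]
  | 12 => [:: 16; 5; 32; 10]
  | 13 => [:: 32; 5; 16; 2; 40; 1; 20]
  | 14 => [:: 32; 5; 16; 2; 40; 1; 20; 2; 40; 1; 20]
  | 15 => [:: 32; 5; 16; 2; 40; 1; 20]
  | 16 => [:: 32; 5; 16; 34; 8; 33; 4; 18]
  | 17 => [:: 32; 5; 16; 2; 40; 1; 20; 1; 40; 2; 16; 5; 32; 10]
  | 18 => [:: 32; 5; 16; 2; 40; 1; 20; 33; 8; 34]
  | 19 => [:: 32; 5; 16; 2; 40; 1; 20; 2; 40; 1; 20]
  | 20 => [:: 32; 5; 16; 2; 40; 1; 20; 1; 40; 2; 16; 5; 32; 10]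
  | _ => [:: 32; 5; 16; 2; 40; 1; 20; 2; 40; 1; 20; 1; 40; 2; 16; 5; 32; 10]
  end.
Definition W6 : seq col := map code2col [:: 9; 34; 16; 5; 32; 10].
Definition W7 : seq col := map code2col [:: 34; 8; 33; 4; 17; 8; 34].

Definition costW (W : seq col) : nat := sumn (map cnt W).

Lemma costW_big W : costW W = \sum_(c <- W) cnt c.
Proof. by rewrite /costW sumnE big_map. Qed.

Definition goodW (n : nat) (W : seq col) : bool :=
  [&& valid3 (zc :: W ++ [:: zc]), size W == n, costW W == fv n & all (fun c => size c == 6) W].

Definition chkb (b : nat) : bool :=
  [&& valid3 (zc :: Ap b ++ [:: xc; yc]), valid3 ([:: xc; yc] ++ Dp b ++ [:: zc]),
      size (Ap b) + 2 + size (Dp b) == b, costW (Ap b ++ [:: xc; yc] ++ Dp b) == fv b &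
      all (fun c => size c == 6) (Ap b ++ [:: xc; yc] ++ Dp b)].

Definition constchecks : bool :=
  [&& all chkb (iota 8 14), valid3 ([:: xc; yc] ++ Cp ++ [:: xc; yc]), size Cp == 12,
      costW (Cp ++ [:: xc; yc]) == 20, all (fun c => size c == 6) (Cp ++ [:: xc; yc]),
      goodW 6 W6 & goodW 7 W7].

Lemma constchecks_ok : constchecks.
Proof. vm_compute. reflexivity. Qed.

Lemma costW_cat W1 W2 : costW (W1 ++ W2) = costW W1 + costW W2.
Proof. by rewrite /costW map_cat sumn_cat. Qed.

Lemma fv14 b q : 8 <= b -> fv (b + 14 * q) = fv b + 20 * q.
Proof.
move=> hb; elim: q => [|q IH]; first by rewrite !muln0 !addn0.
have -> : b + 14 * q.+1 = (b + 14 * q + 7) + 7 by lia.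
rewrite !fv7; lia.
Qed.

Lemma word_exists n : 6 <= n -> exists W, goodW n W.
Proof.
have /and5P [/allP hb hC hCs hCc /and3P [hC6 hW6 hW7]] := constchecks_ok.
move=> hn; case: (ltnP n 8) => hn8.
- by case: n hn hn8 => [|[|[|[|[|[|[|[|n]]]]]]]] // _ _; [exists W6 | exists W7].
have [b [q [En [hb8 hb22]]]] : exists b q, n = b + 14 * q /\ 8 <= b /\ b < 22.
  exists (8 + (n - 8) %% 14), ((n - 8) %/ 14).
  have := ltn_pmod (n - 8) (isT : 0 < 14); lia.
have hbb : b \in iota 8 14 by rewrite mem_iota; lia.
have /and5P [h1 h2 /eqP h3 /eqP h4 /allP h5] := hb b hbb.
have s2 : size [:: xc; yc] = 2 by [].
exists (Ap b ++ [:: xc; yc] ++ rep (Cp ++ [:: xc; yc]) q ++ Dp b).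
apply/and4P; split.
- have E1 : zc :: (Ap b ++ [:: xc; yc] ++ rep (Cp ++ [:: xc; yc]) q ++ Dp b) ++ [:: zc] =
     (zc :: Ap b) ++ [:: xc; yc] ++ (rep (Cp ++ [:: xc; yc]) q ++ Dp b ++ [:: zc]).
    rewrite -!catA; reflexivity.
  rewrite E1; apply: valid3_cat; first exact: h1.
  exact: (@valid3_rep xc yc Cp (Dp b ++ [:: zc]) q hC h2).
- have Hs : forall q, size (rep (Cp ++ [:: xc; yc]) q) = 14 * q.
    elim=> [|k IH]; first by [].
    change (rep (Cp ++ [:: xc; yc]) k.+1) with ((Cp ++ [:: xc; yc]) ++ rep (Cp ++ [:: xc; yc]) k).
    rewrite !size_cat IH (eqP hCs) s2; lia.
  rewrite !size_cat Hs s2; apply/eqP; lia.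
- have Hr : forall q, costW (rep (Cp ++ [:: xc; yc]) q) = 20 * q.
    elim=> [|k IH]; first by [].
    change (rep (Cp ++ [:: xc; yc]) k.+1) with ((Cp ++ [:: xc; yc]) ++ rep (Cp ++ [:: xc; yc]) k).
    rewrite costW_cat IH (eqP hCc); lia.
  move: h4; rewrite En fv14 //.
  rewrite !costW_cat Hr => <-; apply/eqP; lia.
- apply/allP => c; rewrite !mem_cat => /or3P [hc|hc|/orP [hc|hc]].
  + by apply: h5; rewrite mem_cat hc.
  + by apply: h5; rewrite !mem_cat hc orbT.
  + elim: q hc {En} => [|k IH]; first by [].
    change (rep (Cp ++ [:: xc; yc]) k.+1) with ((Cp ++ [:: xc; yc]) ++ rep (Cp ++ [:: xc; yc]) k).
    rewrite mem_cat => /orP [hc|hc]; last exact: IH.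
    exact: (allP hC6).
  + by apply: h5; rewrite !mem_cat hc !orbT.
Qed.

Lemma mem_allcols (c : col) : size c == 6 -> c \in allcols.
Proof.
case: c => [|b0 [|b1 [|b2 [|b3 [|b4 [|b5 [|]]]]]]] //= _.
by case: b0; case: b1; case: b2; case: b3; case: b4; case: b5; vm_compute.
Qed.

Lemma colS_out n (S : {set 'I_6 * 'I_n}) c : (c == 0) || (n < c) -> colS S c = zc.
Proof.
move=> h; rewrite /colS (@eq_mkseq _ (fun i => Fc S i.+1 c) (fun=> false)); first by [].
move=> i; apply: Fc_out; case/orP: h => ->; rewrite ?orbT //.
Qed.

Lemma lower n (S : {set 'I_6 * 'I_n}) : 6 <= n -> indep12 (@grid_adj 6 n) S -> fv n <= #|S|.
Proof.
move=> hn; rewrite indep12_ok3 => /forallP h.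
rewrite cardS; apply: lower_word => //.
- by move=> c; apply: mem_allcols; rewrite size_mkseq.
- by rewrite colS_out.
- by rewrite colS_out // ltnSn orbT.
- move=> c /andP [c0 cn]; case: c c0 cn => [|j] // _ hj.
  have hj' : j < n by lia.
  exact: (h (Ordinal hj')).
Qed.

Lemma upper n : 6 <= n -> exists S : {set 'I_6 * 'I_n}, indep12 (@grid_adj 6 n) S /\ #|S| = fv n.
Proof.
move=> hn; have [W /and4P [hv /eqP hs /eqP hc /allP h6]] := word_exists hn.
set L := zc :: W ++ [:: zc].
pose S := [set u : 'I_6 * 'I_n | nth false (nth zc L u.2.+1) u.1].
have hL6 : forall c, size (nth zc L c) = 6.
  move=> c; case: (ltnP c (size L)) => hc'; last by rewrite nth_default.
  have := mem_nth zc hc'; rewrite /L inE mem_cat => /or3P [/eqP ->|/h6/eqP //|].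
    by [].
  by rewrite inE => /eqP ->.
have hcol : forall c, c <= n.+1 -> colS S c = nth zc L c.
  move=> c hcn; rewrite -[RHS](@mkseq_nth _ false) hL6 /colS; apply: eq_mkseq => i.
  case: (ltnP i 6) => hi; last first.
    have h7 : 6 < i.+1 by lia.
    by rewrite nth_default ?hL6 // Fc_out // h7 orbT.
  case: c hcn => [|j] hj.
    rewrite Fc_out; last by rewrite eqxx !orbT.
    rewrite /L; change (nth zc (zc :: W ++ [:: zc]) 0) with zc.
    by rewrite nth_nseq if_same.
  case: (ltnP j n) => hjn.
    by rewrite (Fc_in S (Ordinal hi) (Ordinal hjn)) inE.
  have -> : j = n by lia.
  rewrite Fc_out; last by rewrite ltnSn !orbT.
  rewrite /L; change (nth zc (zc :: W ++ [:: zc]) n.+1) with (nth zc (W ++ [:: zc]) n).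
  rewrite nth_cat hs ltnn subnn; change (nth zc [:: zc] 0) with zc.
  by rewrite nth_nseq if_same.
exists S; split.
- rewrite indep12_ok3; apply/forallP => j.
  have hj := ltn_ord j.
  rewrite !hcol; try lia.
  by apply: valid3_nth => //; rewrite /L /= size_cat hs /=; have := ltn_ord j; lia.
- rewrite (cardS S) -hc costW_big (big_nth zc) big_mkord hs; apply: eq_bigr => j _.
  by rewrite hcol /L /= ?nth_cat ?hs ?ltn_ord //; have := ltn_ord j; lia.
Qed.

Theorem mainTheorem7 (n : nat) (hn : 6 <= n) :
  is_i12_number (@grid_adj 6 n)
    (if ((n %% 7 == 0) || (n %% 7 == 3)) && (n != 7)
     then (10 * n + 17) %/ 7
     else (10 * n + 10) %/ 7).
Proof.
rewrite -/(fv n); split.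
- exact: upper.
- by move=> S; apply: lower.
Qed.
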